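(* Let $(X,V)$ and $(\overline{X},\overline{V})$ be global solutions of the discrete Motsch–Tadmor model (as in the context) whose initial data satisfy \[ \max\{\|\Delta^x(0)\|_F,\|\Delta^{\overline{x}}(0)\|_F\}<M,\quad \|\Delta^v(0)\|_F<\kappa\int_{\|\Delta^x(0)\|_F}^M\psi(s)\,ds,\quad \|\Delta^{\overline{v}}(0)\|_F<\kappa\int_{\|\Delta^{\overline{x}}(0)\|_F}^M\psi(s)\,ds. \] Define $\lambda(n)=\min_{1\le i,j\le N}(\overline{\phi}_{ij}(n)+\overline{\phi}_{ji}(n))$ and $\alpha(n)=\max_{1\le i,j\le N}(1-\overline{\phi}_{ij}(n)-\overline{\phi}_{ii}(n))^2$. Then for all $n\ge0$, \[ \|\Delta^v(n+1)-\Delta^{\overline{v}}(n+1)\|_F^2\le\mathcal{C}_1\|\Delta^v(n)-\Delta^{\overline{v}}(n)\|_F^2+\mathcal{C}_2\|\Delta^v(n)-\Delta^{\overline{v}}(n)\|_F\|\Delta^v(n)\|_F+\mathcal{C}_3\|\Delta^v(n)\|_F^2, \] where \[ \mathcal{C}_1=(1-h\kappa\lambda(n))^2+4h^2\kappa^2\Big(\alpha(n)+\frac{L_a^2M^2}{Nc_1^2}\big(1+\tfrac{c_2}{c_1}\big)^2\Big)+2\sqrt{2}h\kappa(1-h\kappa\lambda(n))\Big(\alpha(n)+\frac{L_a^2M^2}{c_1^2}\big(1+\tfrac{c_2}{c_1}\big)^2\Big)^{1/2}, \] \[ \mathcal{C}_2=\frac{8h\kappa L_aM}{c_1}(1-h\kappa\lambda(n))\big(1+\tfrac{c_2}{c_1}\big),\qquad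 \mathcal{C}_3=\frac{32h^2\kappa^2L_a^2M^2}{c_1^2}\big(1+\tfrac{c_2}{c_1}\big)^2 . \]
   Context: Discrete MT model: fix $N\ge1$, $d\ge1$, $\kappa>0$, $h>0$, and $a:[0,\infty)\to\mathbb{R}$ with constants $0<c_1\le c_2$, $c_1\le a\le c_2$, $|a(r_1)-a(r_2)|\le L_a|r_1-r_2|$ ($L_a>0$); $0<h<\min\{1,1/\kappa\}$. A solution satisfies $x_i(n+1)=x_i(n)+hv_i(n)$, $v_i(n+1)=v_i(n)+h\kappa\sum_j\phi_{ij}(n)(v_j(n)-v_i(n))$ with $\phi_{ij}(n)=\frac{a(\|x_i(n)-x_j(n)\|)}{\sum_ka(\|x_i(n)-x_k(n)\|)}$; for the second solution $\overline{\phi}_{ij}(n)=\frac{a(\|\overline{x}_i(n)-\overline{x}_j(n)\|)}{\sum_ka(\|\overline{x}_i(n)-\overline{x}_k(n)\|)}$. Notation: $\Delta^x_{ij}=x_i-x_j$, $\Delta^v_{ij}=v_i-v_j$, similarly $\Delta^{\overline{x}},\Delta^{\overline{v}}$; $\|A\|_F=(\sum_{i,j}\|A_{ij}\|^2)^{1/2}$. Constants: $\|\phi\|_{\mathrm{Lip}}=\frac{L_a}{Nc_1}(1+\frac{c_2}{c_1})$, $M=\frac{1}{4N\|\phi\|_{\mathrm{Lip}}}$, $\psi(s)=1-\|\phi\|_{\mathrm{Lip}}Ns$. *)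

(* Defs.v *)
From Stdlib Require Import Reals List.
From Coquelicot Require Import Coquelicot.
Open Scope R_scope.

(* Agents are indexed by 0..N-1, coordinates by 0..d-1.
   A trajectory is  x : nat -> nat -> nat -> R  with  x n i k  = k-th
   coordinate of agent i at time step n. *)

Definition sumN (N : nat) (f : nat -> R) : R :=
  fold_right Rplus 0 (map f (seq 0 N)).

(* min / max over i < N (meaningful for N >= 1) *)
Definition minN (N : nat) (f : nat -> R) : R :=
  fold_right Rmin (f 0%nat) (map f (seq 0 N)).
Definition maxN (N : nat) (f : nat -> R) : R :=
  fold_right Rmax (f 0%nat) (map f (seq 0 N)).

Definition vnorm (d : nat) (u : nat -> R) : R :=
  sqrt (sumN d (fun k => u k ^ 2)).

Definition dist_ij (d : nat) (x : nat -> nat -> nat -> R) (n i j : nat) : R :=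
  vnorm d (fun k => x n i k - x n j k).

Definition phi (N d : nat) (a : R -> R) (x : nat -> nat -> nat -> R)
  (n i j : nat) : R :=
  a (dist_ij d x n i j) / sumN N (fun l => a (dist_ij d x n i l)).

Definition MT_solution (N d : nat) (kappa h : R) (a : R -> R)
  (x v : nat -> nat -> nat -> R) : Prop :=
  forall n i k, (i < N)%nat -> (k < d)%nat ->
    x (S n) i k = x n i k + h * v n i k /\
    v (S n) i k = v n i k
      + h * kappa * sumN N (fun j => phi N d a x n i j * (v n j k - v n i k)).

(* Frobenius norm of the matrix Delta^x(n) = (x_i(n) - x_j(n))_{ij} *)
Definition frobD (N d : nat) (x : nat -> nat -> nat -> R) (n : nat) : R :=
  sqrt (sumN N (fun i => sumN N (fun j => dist_ij d x n i j ^ 2))).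

Definition frobDD (N d : nat) (v vb : nat -> nat -> nat -> R) (n : nat) : R :=
  sqrt (sumN N (fun i => sumN N (fun j =>
    vnorm d (fun k => (v n i k - v n j k) - (vb n i k - vb n j k)) ^ 2))).

Definition phiLip (N : nat) (La c1 c2 : R) : R :=
  La / (INR N * c1) * (1 + c2 / c1).
Definition Mconst (N : nat) (La c1 c2 : R) : R :=
  1 / (4 * INR N * phiLip N La c1 c2).
Definition psi (N : nat) (La c1 c2 : R) (s : R) : R :=
  1 - phiLip N La c1 c2 * INR N * s.

Definition lambda_n (N d : nat) (a : R -> R) (xb : nat -> nat -> nat -> R)
  (n : nat) : R :=
  minN N (fun i => minN N (fun j => phi N d a xb n i j + phi N d a xb n j i)).
Definition alpha_n (N d : nat) (a : R -> R) (xb : nat -> nat -> nat -> R)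
  (n : nat) : R :=
  maxN N (fun i => maxN N (fun j =>
    (1 - phi N d a xb n i j - phi N d a xb n i i) ^ 2)).

(* Main.v *)
Require Import Defs.
From Stdlib Require Import Reals List Lra Lia Psatz.
From Coquelicot Require Import Coquelicot.
Open Scope R_scope.

Lemma fold_plus_c (l : list R) (c : R) :
  fold_right Rplus c l = fold_right Rplus 0 l + c.
Proof. induction l; simpl; [lra| rewrite IHl; lra]. Qed.

Lemma sumN_0 f : sumN 0 f = 0.
Proof. reflexivity. Qed.

Lemma sumN_S n f : sumN (S n) f = sumN n f + f n.
Proof.
  unfold sumN. rewrite seq_S, map_app, fold_right_app. simpl.
  rewrite fold_plus_c. lra.
Qed.

Lemma sumN_first n f : sumN (S n) f = f 0%nat + sumN n (fun i => f (S i)).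
Proof.
  unfold sumN. simpl. f_equal. rewrite <- seq_shift, map_map. reflexivity.
Qed.

Lemma sumN_ext_lt n f g : (forall i, (i < n)%nat -> f i = g i) -> sumN n f = sumN n g.
Proof.
  induction n; intros H; [reflexivity|]. rewrite !sumN_S, IHn, H; auto.
Qed.

Lemma sumN_ext n f g : (forall i, f i = g i) -> sumN n f = sumN n g.
Proof. intros; apply sumN_ext_lt; auto. Qed.

Lemma sumN_plus n f g : sumN n (fun i => f i + g i) = sumN n f + sumN n g.
Proof. induction n; [simpl; unfold sumN; simpl; lra|]. rewrite !sumN_S, IHn. lra. Qed.

Lemma sumN_scal n c f : sumN n (fun i => c * f i) = c * sumN n f.
Proof. induction n; [unfold sumN; simpl; lra|]. rewrite !sumN_S, IHn. lra. Qed.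

Lemma sumN_minus n f g : sumN n (fun i => f i - g i) = sumN n f - sumN n g.
Proof. induction n; [unfold sumN; simpl; lra|]. rewrite !sumN_S, IHn. lra. Qed.

Lemma sumN_const n c : sumN n (fun _ => c) = INR n * c.
Proof. induction n; [unfold sumN; simpl; lra|]. rewrite !sumN_S, IHn, S_INR. lra. Qed.

Lemma sumN_le n f g : (forall i, (i < n)%nat -> f i <= g i) -> sumN n f <= sumN n g.
Proof.
  induction n; intros H; [unfold sumN; simpl; lra|]. rewrite !sumN_S.
  assert (sumN n f <= sumN n g) by (apply IHn; auto).
  assert (f n <= g n) by (apply H; lia). lra.
Qed.

Lemma sumN_nonneg n f : (forall i, (i < n)%nat -> 0 <= f i) -> 0 <= sumN n f.
Proof.
  intros H. replace 0 with (sumN n (fun _ => 0)) by (rewrite sumN_const; lra).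
  apply sumN_le; auto.
Qed.

Lemma sumN_single n f j : (forall i, (i < n)%nat -> 0 <= f i) -> (j < n)%nat -> f j <= sumN n f.
Proof.
  induction n; intros H Hj; [lia|]. rewrite sumN_S.
  destruct (Nat.eq_dec j n).
  - subst. assert (0 <= sumN n f) by (apply sumN_nonneg; auto). lra.
  - assert (f j <= sumN n f) by (apply IHn; auto; lia).
    assert (0 <= f n) by (apply H; lia). lra.
Qed.

Lemma sumN_abs n f : Rabs (sumN n f) <= sumN n (fun i => Rabs (f i)).
Proof.
  induction n; [unfold sumN; simpl; rewrite Rabs_R0; lra|]. rewrite !sumN_S.
  eapply Rle_trans; [apply Rabs_triang|]. lra.
Qed.

Lemma sumN_swap n m (f : nat -> nat -> R) :
  sumN n (fun i => sumN m (fun j => f i j)) = sumN m (fun j => sumN n (fun i => f i j)).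
Proof.
  induction n.
  - unfold sumN at 1; simpl. symmetry. replace 0 with (sumN m (fun _ => 0)) by (rewrite sumN_const; lra).
    apply sumN_ext. intros; reflexivity.
  - rewrite sumN_S, IHn, <- sumN_plus. apply sumN_ext. intros; rewrite sumN_S; reflexivity.
Qed.

Lemma discr A B C : 0 <= C -> (forall t, 0 <= A + 2 * B * t + C * t ^ 2) -> B ^ 2 <= A * C.
Proof.
  intros HC H. destruct (Req_dec C 0) as [H0|H0].
  - subst. destruct (Req_dec B 0) as [HB|HB]; [subst; lra|].
    specialize (H (- (A + 1) / (2 * B))). exfalso.
    replace (A + 2 * B * (- (A + 1) / (2 * B)) + 0 * (- (A + 1) / (2 * B)) ^ 2) with (-1) in H
      by (field; auto). lra.
  - specialize (H (- B / C)).
    replace (A + 2 * B * (- B / C) + C * (- B / C) ^ 2) with ((A * C - B ^ 2) / C) in H by (field; auto).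
    assert (0 < C) by lra.
    apply Rmult_le_compat_r with (r := C) in H; [|lra].
    unfold Rdiv in H. rewrite Rmult_assoc, Rinv_l, Rmult_0_l in H by lra. lra.
Qed.

Section Generic.
Variable X : Type.
Variable L : (X -> R) -> R.
Hypothesis L_ext : forall f g, (forall x, f x = g x) -> L f = L g.
Hypothesis L_plus : forall f g, L (fun x => f x + g x) = L f + L g.
Hypothesis L_scal : forall c f, L (fun x => c * f x) = c * L f.
Hypothesis L_pos : forall f, (forall x, 0 <= f x) -> 0 <= L f.

Lemma L_CS f g : (L (fun x => f x * g x)) ^ 2 <= L (fun x => f x ^ 2) * L (fun x => g x ^ 2).
Proof.
  apply discr. { apply L_pos. intros; apply pow2_ge_0. }
  intros t. assert (0 <= L (fun x => (f x + t * g x) ^ 2)) by (apply L_pos; intros; apply pow2_ge_0).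
  rewrite (L_ext _ (fun x => f x ^ 2 + ((2 * t) * (f x * g x) + t ^ 2 * (g x ^ 2)))) in H
    by (intros; ring).
  rewrite L_plus, L_plus, L_scal, L_scal in H. lra.
Qed.

Lemma L_mink f g : sqrt (L (fun x => (f x + g x) ^ 2)) <= sqrt (L (fun x => f x ^ 2)) + sqrt (L (fun x => g x ^ 2)).
Proof.
  assert (Hf : 0 <= L (fun x => f x ^ 2)) by (apply L_pos; intros; apply pow2_ge_0).
  assert (Hg : 0 <= L (fun x => g x ^ 2)) by (apply L_pos; intros; apply pow2_ge_0).
  assert (Hs : 0 <= L (fun x => (f x + g x) ^ 2)) by (apply L_pos; intros; apply pow2_ge_0).
  assert (Hcs := L_CS f g).
  rewrite (L_ext _ (fun x => f x ^ 2 + (2 * (f x * g x) + 1 * g x ^ 2))) by (intros; ring).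
  rewrite L_plus, L_plus, L_scal, L_scal.
  set (a := L (fun x => f x ^ 2)) in *. set (b := L (fun x => g x ^ 2)) in *.
  set (m := L (fun x => f x * g x)) in *.
  assert (Hsa := sqrt_pos a). assert (Hsb := sqrt_pos b).
  assert (Hm : m <= sqrt a * sqrt b).
  { assert (m ^ 2 <= (sqrt a * sqrt b) ^ 2).
    { rewrite Rpow_mult_distr, !pow2_sqrt by auto. auto. }
    destruct (Rle_dec m 0); [nra|]. apply Rsqr_incr_0_var; unfold Rsqr; nra. }
  rewrite <- (sqrt_pow2 (sqrt a + sqrt b)) by lra. apply sqrt_le_1_alt.
  replace ((sqrt a + sqrt b) ^ 2) with (sqrt a ^ 2 + 2 * (sqrt a * sqrt b) + sqrt b ^ 2) by ring.
  rewrite !pow2_sqrt by auto. lra.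
Qed.

Lemma L_scal_norm c f : sqrt (L (fun x => (c * f x) ^ 2)) = Rabs c * sqrt (L (fun x => f x ^ 2)).
Proof.
  rewrite (L_ext _ (fun x => c ^ 2 * f x ^ 2)) by (intros; ring).
  rewrite L_scal, sqrt_mult; [| apply pow2_ge_0 | apply L_pos; intros; apply pow2_ge_0].
  rewrite <- sqrt_Rsqr_abs. unfold Rsqr. f_equal. f_equal. ring.
Qed.
End Generic.


Lemma sumN_L_pos n f : (forall x, 0 <= f x) -> 0 <= sumN n f.
Proof. intros; apply sumN_nonneg; auto. Qed.

Lemma sumN_CS n f g : (sumN n (fun x => f x * g x)) ^ 2 <= sumN n (fun x => f x ^ 2) * sumN n (fun x => g x ^ 2).
Proof. apply (L_CS nat (sumN n)); intros; auto using sumN_ext, sumN_plus, sumN_scal, sumN_L_pos. Qed.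

Lemma sumN_mink n f g : sqrt (sumN n (fun x => (f x + g x) ^ 2)) <= sqrt (sumN n (fun x => f x ^ 2)) + sqrt (sumN n (fun x => g x ^ 2)).
Proof. apply (L_mink nat (sumN n)); intros; auto using sumN_ext, sumN_plus, sumN_scal, sumN_L_pos. Qed.

Definition T3 (N d : nat) (F : nat -> nat -> nat -> R) : R :=
  sumN N (fun i => sumN N (fun j => sumN d (fun k => F i j k))).
Definition FN (N d : nat) (F : nat -> nat -> nat -> R) : R :=
  sqrt (T3 N d (fun i j k => F i j k ^ 2)).

Definition Lt (N d : nat) (f : nat * nat * nat -> R) : R := T3 N d (fun i j k => f (i, j, k)).

Lemma T3_ext_lt N d F G : (forall i j k, (i < N)%nat -> (j < N)%nat -> (k < d)%nat -> F i j k = G i j k) ->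
  T3 N d F = T3 N d G.
Proof.
  intros H; unfold T3. apply sumN_ext_lt; intros i Hi. apply sumN_ext_lt; intros j Hj.
  apply sumN_ext_lt; intros k Hk. auto.
Qed.

Lemma T3_plus N d F G : T3 N d (fun i j k => F i j k + G i j k) = T3 N d F + T3 N d G.
Proof.
  unfold T3. rewrite <- sumN_plus. apply sumN_ext; intros i. rewrite <- sumN_plus.
  apply sumN_ext; intros j. apply sumN_plus.
Qed.

Lemma T3_scal N d c F : T3 N d (fun i j k => c * F i j k) = c * T3 N d F.
Proof.
  unfold T3. rewrite <- sumN_scal. apply sumN_ext; intros i. rewrite <- sumN_scal.
  apply sumN_ext; intros j. apply sumN_scal.
Qed.

Lemma T3_le N d F G : (forall i j k, (i < N)%nat -> (j < N)%nat -> (k < d)%nat -> F i j k <= G i j k) ->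
  T3 N d F <= T3 N d G.
Proof.
  intros H; unfold T3. apply sumN_le; intros i Hi. apply sumN_le; intros j Hj.
  apply sumN_le; intros k Hk. auto.
Qed.

Lemma T3_nonneg N d F : (forall i j k, 0 <= F i j k) -> 0 <= T3 N d F.
Proof.
  intros H; unfold T3. apply sumN_nonneg; intros i Hi. apply sumN_nonneg; intros j Hj.
  apply sumN_nonneg; intros k Hk. auto.
Qed.

Lemma Lt_facts N d :
  (forall f g, (forall x, f x = g x) -> Lt N d f = Lt N d g) /\
  (forall f g, Lt N d (fun x => f x + g x) = Lt N d f + Lt N d g) /\
  (forall c f, Lt N d (fun x => c * f x) = c * Lt N d f) /\
  (forall f, (forall x, 0 <= f x) -> 0 <= Lt N d f).
Proof.
  unfold Lt; repeat split.
  - intros f g H. apply T3_ext_lt; auto.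
  - intros f g. apply (T3_plus N d (fun i j k => f (i,j,k)) (fun i j k => g (i,j,k))).
  - intros c f. apply (T3_scal N d c (fun i j k => f (i,j,k))).
  - intros f H. apply T3_nonneg; auto.
Qed.

Lemma FN_mink N d F G : FN N d (fun i j k => F i j k + G i j k) <= FN N d F + FN N d G.
Proof.
  destruct (Lt_facts N d) as (H1 & H2 & H3 & H4).
  exact (L_mink _ (Lt N d) H1 H2 H3 H4 (fun p => F (fst (fst p)) (snd (fst p)) (snd p))
                                      (fun p => G (fst (fst p)) (snd (fst p)) (snd p))).
Qed.

Lemma FN_scal N d c F : FN N d (fun i j k => c * F i j k) = Rabs c * FN N d F.
Proof.
  destruct (Lt_facts N d) as (H1 & H2 & H3 & H4).
  exact (L_scal_norm _ (Lt N d) H1 H3 H4 c (fun p => F (fst (fst p)) (snd (fst p)) (snd p))).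
Qed.

Lemma FN_ext_lt N d F G : (forall i j k, (i < N)%nat -> (j < N)%nat -> (k < d)%nat -> F i j k = G i j k) ->
  FN N d F = FN N d G.
Proof. intros H; unfold FN; f_equal; apply T3_ext_lt; intros; rewrite H; auto. Qed.

Lemma FN_nonneg N d F : 0 <= FN N d F.
Proof. apply sqrt_pos. Qed.

Lemma FN_sq N d F : FN N d F ^ 2 = T3 N d (fun i j k => F i j k ^ 2).
Proof. unfold FN. apply pow2_sqrt. apply T3_nonneg; intros; apply pow2_ge_0. Qed.

Lemma FN_le_sq N d F B : 0 <= B -> T3 N d (fun i j k => F i j k ^ 2) <= B ^ 2 -> FN N d F <= B.
Proof.
  intros HB H. unfold FN. rewrite <- (sqrt_pow2 B HB). apply sqrt_le_1_alt. auto.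
Qed.

Lemma vnorm_nonneg d u : 0 <= vnorm d u.
Proof. apply sqrt_pos. Qed.

Lemma vnorm_sq d u : vnorm d u ^ 2 = sumN d (fun k => u k ^ 2).
Proof. unfold vnorm. apply pow2_sqrt. apply sumN_nonneg; intros; apply pow2_ge_0. Qed.

Lemma vnorm_ext d u w : (forall k, u k = w k) -> vnorm d u = vnorm d w.
Proof. intros H; unfold vnorm; f_equal; apply sumN_ext; intros; rewrite H; auto. Qed.

Lemma vnorm_tri d u w : vnorm d (fun k => u k + w k) <= vnorm d u + vnorm d w.
Proof. apply sumN_mink. Qed.

Lemma vnorm_opp d u w : vnorm d (fun k => u k - w k) = vnorm d (fun k => w k - u k).
Proof. unfold vnorm; f_equal; apply sumN_ext; intros; ring. Qed.

Lemma dist_rev d (y : nat -> nat -> nat -> R) n i j l :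
  Rabs (dist_ij d y n i l - dist_ij d y n j l) <= dist_ij d y n i j.
Proof.
  unfold dist_ij. apply Rabs_le. split.
  - assert (H := vnorm_tri d (fun k => y n j k - y n i k) (fun k => y n i k - y n l k)).
    rewrite (vnorm_ext d _ (fun k => y n j k - y n l k)) in H by (intros; ring).
    rewrite (vnorm_opp d (fun k => y n j k) (fun k => y n i k)) in H. lra.
  - assert (H := vnorm_tri d (fun k => y n i k - y n j k) (fun k => y n j k - y n l k)).
    rewrite (vnorm_ext d _ (fun k => y n i k - y n l k)) in H by (intros; ring). lra.
Qed.

Lemma dist_nonneg d y n i j : 0 <= dist_ij d y n i j.
Proof. apply vnorm_nonneg. Qed.

Lemma frobD_FN N d y n : frobD N d y n = FN N d (fun i j k => y n i k - y n j k).
Proof.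
  unfold frobD, FN, T3. f_equal. apply sumN_ext; intros i; apply sumN_ext; intros j.
  unfold dist_ij. apply vnorm_sq.
Qed.

Lemma frobDD_FN N d v vb n : frobDD N d v vb n =
  FN N d (fun i j k => (v n i k - v n j k) - (vb n i k - vb n j k)).
Proof.
  unfold frobDD, FN, T3. f_equal. apply sumN_ext; intros i; apply sumN_ext; intros j.
  apply vnorm_sq.
Qed.

Lemma dist_le_frobD N d y n i j : (i < N)%nat -> (j < N)%nat -> dist_ij d y n i j <= frobD N d y n.
Proof.
  intros Hi Hj. unfold frobD. rewrite <- (sqrt_pow2 (dist_ij d y n i j)) by apply dist_nonneg.
  apply sqrt_le_1_alt.
  eapply Rle_trans; [| apply (sumN_single N _ i); auto].
  - apply (sumN_single N (fun j => dist_ij d y n i j ^ 2) j); auto. intros; apply pow2_ge_0.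
  - intros; apply sumN_nonneg; intros; apply pow2_ge_0.
Qed.

Lemma div_bound x e S nc : 0 <= x -> x <= e -> 0 < nc -> nc <= S -> x / S <= e / nc.
Proof.
  intros H1 H2 H3 H4. unfold Rdiv. apply Rmult_le_compat; auto.
  - left; apply Rinv_0_lt_compat; lra.
  - apply Rinv_le_contravar; auto.
Qed.

Lemma quot_lemma A A' S S' e n c1 c2 :
  0 < n -> 0 < c1 -> 0 <= A' <= c2 -> n * c1 <= S -> n * c1 <= S' ->
  Rabs (A - A') <= e -> Rabs (S - S') <= n * e ->
  Rabs (A / S - A' / S') <= e / (n * c1) * (1 + c2 / c1).
Proof.
  intros Hn Hc1 HA HS HS' He HSe.
  assert (Hnc : 0 < n * c1) by nra.
  replace (A / S - A' / S') with ((A - A') / S + A' * ((S' - S) / (S * S'))) by (field; lra).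
  rewrite Rabs_minus_sym in HSe.
  eapply Rle_trans; [apply Rabs_triang|].
  rewrite Rabs_mult. unfold Rdiv at 1 2. rewrite !Rabs_mult, !Rabs_inv.
  rewrite (Rabs_right S), (Rabs_right (S * S')) by nra. rewrite (Rabs_right A') by lra.
  assert (t1 : Rabs (A - A') * / S <= e / (n * c1)).
  { apply div_bound; auto using Rabs_pos. }
  assert (t2 : Rabs (S' - S) * / (S * S') <= (n * e) / ((n * c1) * (n * c1))).
  { apply div_bound; auto using Rabs_pos. nra. apply Rmult_le_compat; lra. }
  assert (t3 : A' * (Rabs (S' - S) * / (S * S')) <= c2 * ((n * e) / ((n * c1) * (n * c1)))).
  { apply Rmult_le_compat; try lra. apply Rmult_le_pos. apply Rabs_pos.
    left; apply Rinv_0_lt_compat; nra. }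
  replace (e / (n * c1) * (1 + c2 / c1)) with (e / (n * c1) + c2 * ((n * e) / ((n * c1) * (n * c1))))
    by (field; lra).
  lra.
Qed.

Section Phi.
Variables (N d : nat) (c1 c2 La : R) (a : R -> R).
Hypothesis HN : (1 <= N)%nat.
Hypothesis Hc1 : 0 < c1.
Hypothesis Hc12 : c1 <= c2.
Hypothesis HLa : 0 < La.
Hypothesis Ha_bnd : forall r, 0 <= r -> c1 <= a r <= c2.
Hypothesis Ha_lip : forall r1 r2, 0 <= r1 -> 0 <= r2 -> Rabs (a r1 - a r2) <= La * Rabs (r1 - r2).

Lemma INR_N_pos : 0 < INR N.
Proof. apply lt_0_INR; lia. Qed.

Lemma S_ge (rho : nat -> R) : (forall m, (m < N)%nat -> 0 <= rho m) ->
  INR N * c1 <= sumN N (fun m => a (rho m)).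
Proof.
  intros H. rewrite <- sumN_const. apply sumN_le. intros; apply Ha_bnd; auto.
Qed.

Lemma fam_lemma (rho rho' : nat -> R) e0 l :
  (forall m, (m < N)%nat -> 0 <= rho m) -> (forall m, (m < N)%nat -> 0 <= rho' m) ->
  (forall m, (m < N)%nat -> Rabs (rho m - rho' m) <= e0) -> (l < N)%nat ->
  Rabs (a (rho l) / sumN N (fun m => a (rho m)) - a (rho' l) / sumN N (fun m => a (rho' m)))
   <= phiLip N La c1 c2 * e0.
Proof.
  intros H1 H2 H3 Hl.
  assert (Hn := INR_N_pos).
  replace (phiLip N La c1 c2 * e0) with ((La * e0) / (INR N * c1) * (1 + c2 / c1))
    by (unfold phiLip; field; lra).
  apply quot_lemma; auto.
  - assert (H := Ha_bnd (rho' l) (H2 l Hl)). lra.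
  - apply S_ge; auto.
  - apply S_ge; auto.
  - eapply Rle_trans; [apply Ha_lip; auto|]. apply Rmult_le_compat_l; [lra|]. auto.
  - rewrite <- sumN_minus. eapply Rle_trans; [apply sumN_abs|].
    rewrite <- sumN_const. apply sumN_le. intros m Hm.
    eapply Rle_trans; [apply Ha_lip; auto|]. apply Rmult_le_compat_l; [lra|]. auto.
Qed.

Lemma phi_nonneg y n i j : 0 <= phi N d a y n i j.
Proof.
  unfold phi. apply Rmult_le_pos.
  - assert (H := Ha_bnd _ (dist_nonneg d y n i j)); lra.
  - left; apply Rinv_0_lt_compat.
    assert (H := S_ge (fun m => dist_ij d y n i m) (fun m _ => dist_nonneg d y n i m)).
    assert (Hn := INR_N_pos). nra.
Qed.

Lemma phi_rowsum y n i : sumN N (fun j => phi N d a y n i j) = 1.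
Proof.
  unfold phi. unfold Rdiv.
  rewrite (sumN_ext _ _ (fun j => / sumN N (fun l => a (dist_ij d y n i l)) * a (dist_ij d y n i j)))
    by (intros; ring).
  rewrite sumN_scal. apply Rinv_l.
  assert (H := S_ge (fun m => dist_ij d y n i m) (fun m _ => dist_nonneg d y n i m)).
  assert (Hn := INR_N_pos). nra.
Qed.

Lemma phi_lip y n i j l : (l < N)%nat ->
  Rabs (phi N d a y n i l - phi N d a y n j l) <= phiLip N La c1 c2 * dist_ij d y n i j.
Proof.
  intros Hl. unfold phi.
  apply (fam_lemma (fun m => dist_ij d y n i m) (fun m => dist_ij d y n j m)); auto.
  - intros; apply dist_nonneg.
  - intros; apply dist_nonneg.
  - intros; apply dist_rev.
Qed.

Lemma phi_diff y yb n i l R0 :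
  (forall m, (m < N)%nat -> dist_ij d y n i m <= R0) ->
  (forall m, (m < N)%nat -> dist_ij d yb n i m <= R0) -> (l < N)%nat ->
  Rabs (phi N d a y n i l - phi N d a yb n i l) <= phiLip N La c1 c2 * R0.
Proof.
  intros H1 H2 Hl. unfold phi.
  apply (fam_lemma (fun m => dist_ij d y n i m) (fun m => dist_ij d yb n i m)); auto.
  - intros; apply dist_nonneg.
  - intros; apply dist_nonneg.
  - intros m Hm. assert (A1 := H1 m Hm). assert (A2 := H2 m Hm).
    assert (B1 := dist_nonneg d y n i m). assert (B2 := dist_nonneg d yb n i m).
    apply Rabs_le; lra.
Qed.
End Phi.

Definition Dz (N d : nat) (z : nat -> nat -> R) (i : nat) : R :=
  sumN N (fun l => sumN d (fun k => (z l k - z i k) ^ 2)).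
Definition Zsq (N d : nat) (z : nat -> nat -> R) : R := T3 N d (fun a b k => (z a k - z b k) ^ 2).

Lemma Dz_nonneg N d z i : 0 <= Dz N d z i.
Proof. apply sumN_nonneg; intros; apply sumN_nonneg; intros; apply pow2_ge_0. Qed.

Lemma Dz_le N d z i : (i < N)%nat -> Dz N d z i <= Zsq N d z.
Proof.
  intros Hi. unfold Dz, Zsq, T3. apply sumN_le. intros l Hl.
  apply (sumN_single N (fun b => sumN d (fun k => (z l k - z b k) ^ 2)) i); auto.
  intros; apply sumN_nonneg; intros; apply pow2_ge_0.
Qed.

Lemma Dz_sum N d z : sumN N (fun i => Dz N d z i) = Zsq N d z.
Proof. unfold Dz, Zsq, T3. apply sumN_swap. Qed.

Lemma Zsq_nonneg N d z : 0 <= Zsq N d z.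
Proof. apply T3_nonneg; intros; apply pow2_ge_0. Qed.

Lemma P_lemma N d (c : nat -> R) (z : nat -> nat -> R) i :
  sumN N c = 0 ->
  sumN d (fun k => (sumN N (fun l => c l * z l k)) ^ 2) <= sumN N (fun l => c l ^ 2) * Dz N d z i.
Proof.
  intros Hc. unfold Dz. rewrite sumN_swap, <- sumN_scal. apply sumN_le. intros k Hk.
  replace (sumN N (fun l => c l * z l k)) with (sumN N (fun l => c l * (z l k - z i k))).
  - apply sumN_CS.
  - rewrite (sumN_ext _ _ (fun l => c l * z l k - z i k * c l)) by (intros; ring).
    rewrite sumN_minus, sumN_scal, Hc. ring.
Qed.

Lemma B_lemma N d (delta : nat -> nat -> R) (z : nat -> nat -> R) e1 :
  (forall i, (i < N)%nat -> sumN N (fun l => delta i l) = 0) ->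
  (forall i l, (i < N)%nat -> (l < N)%nat -> Rabs (delta i l) <= e1) ->
  T3 N d (fun i j k => (sumN N (fun l => delta i l * z l k) - sumN N (fun l => delta j l * z l k)) ^ 2)
  <= 4 * INR N * INR N * e1 ^ 2 * Zsq N d z.
Proof.
  intros Hs Hb.
  set (F := fun i k => sumN N (fun l => delta i l * z l k)).
  assert (HF : forall i, (i < N)%nat -> sumN d (fun k => F i k ^ 2) <= INR N * e1 ^ 2 * Dz N d z i).
  { intros i Hi. eapply Rle_trans; [apply P_lemma; auto|].
    apply Rmult_le_compat_r; [apply Dz_nonneg|]. rewrite <- sumN_const. apply sumN_le.
    intros l Hl. apply pow_maj_Rabs. auto. }
  eapply Rle_trans.
  { apply (T3_le N d _ (fun i j k => 2 * F i k ^ 2 + 2 * F j k ^ 2)). intros.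
    fold (F i k) (F j k). assert (0 <= (F i k + F j k) ^ 2) by apply pow2_ge_0. nra. }
  rewrite T3_plus, !T3_scal. unfold T3.
  rewrite (sumN_ext N (fun i => sumN N (fun j => sumN d (fun k => F i k ^ 2)))
     (fun i => INR N * sumN d (fun k => F i k ^ 2)))
    by (intros; rewrite sumN_const; auto).
  rewrite (sumN_const N (sumN N (fun j => sumN d (fun k => F j k ^ 2)))).
  rewrite sumN_scal.
  assert (HS : sumN N (fun i => sumN d (fun k => F i k ^ 2)) <= INR N * e1 ^ 2 * Zsq N d z).
  { rewrite <- Dz_sum, <- sumN_scal. apply sumN_le; auto. }
  assert (Hn := pos_INR N). nra.
Qed.

Section G.
Variables (N d : nat) (c1 c2 La : R) (a : R -> R).
Hypothesis HN : (1 <= N)%nat.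
Hypothesis Hc1 : 0 < c1.
Hypothesis Hc12 : c1 <= c2.
Hypothesis HLa : 0 < La.
Hypothesis Ha_bnd : forall r, 0 <= r -> c1 <= a r <= c2.
Hypothesis Ha_lip : forall r1 r2, 0 <= r1 -> 0 <= r2 -> Rabs (a r1 - a r2) <= La * Rabs (r1 - r2).

Lemma G_lemma y n (z : nat -> nat -> R) :
  T3 N d (fun i j k => (sumN N (fun l => (phi N d a y n i l - phi N d a y n j l) * z l k)) ^ 2)
  <= INR N * phiLip N La c1 c2 ^ 2 * frobD N d y n ^ 2 * Zsq N d z.
Proof.
  set (Lp := phiLip N La c1 c2).
  assert (HLp : 0 <= Lp).
  { unfold Lp, phiLip. assert (Hn := INR_N_pos N HN).
    apply Rmult_le_pos. unfold Rdiv; apply Rmult_le_pos; [lra|left; apply Rinv_0_lt_compat; nra].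
    assert (0 <= c2 / c1) by (unfold Rdiv; apply Rmult_le_pos; [lra|left; apply Rinv_0_lt_compat; lra]). lra. }
  unfold T3.
  eapply Rle_trans.
  { apply sumN_le; intros i Hi. apply sumN_le; intros j Hj.
    eapply Rle_trans; [apply P_lemma|].
    - rewrite sumN_minus, !(phi_rowsum N d c1 c2 a) by auto. ring.
    - apply Rmult_le_compat; [apply sumN_nonneg; intros; apply pow2_ge_0 | apply Dz_nonneg | | apply (Dz_le N d z i Hi)].
      instantiate (1 := INR N * (Lp * dist_ij d y n i j) ^ 2).
      rewrite <- sumN_const. apply sumN_le. intros l Hl.
      assert (H : Rabs (phi N d a y n i l - phi N d a y n j l) <= Lp * dist_ij d y n i j)
        by (eapply phi_lip; eauto). apply pow_maj_Rabs. auto. }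
  rewrite (sumN_ext _ _ (fun i => (INR N * Lp ^ 2 * Zsq N d z) * sumN N (fun j => dist_ij d y n i j ^ 2))).
  2:{ intros i. rewrite <- sumN_scal. apply sumN_ext. intros; ring. }
  rewrite sumN_scal. unfold frobD. rewrite pow2_sqrt. right; ring.
  apply sumN_nonneg; intros; apply sumN_nonneg; intros; apply pow2_ge_0.
Qed.
End G.

Section Dyn.
Variables (N d : nat) (kappa h c1 c2 La : R) (a : R -> R).
Hypothesis HN : (1 <= N)%nat.
Hypothesis Hkappa : 0 < kappa.
Hypothesis Hh0 : 0 < h.
Hypothesis Hhk : h < 1 / kappa.
Hypothesis Hc1 : 0 < c1.
Hypothesis Hc12 : c1 <= c2.
Hypothesis HLa : 0 < La.
Hypothesis Ha_bnd : forall r, 0 <= r -> c1 <= a r <= c2.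
Hypothesis Ha_lip : forall r1 r2, 0 <= r1 -> 0 <= r2 -> Rabs (a r1 - a r2) <= La * Rabs (r1 - r2).

Lemma hk_lt1 : h * kappa < 1.
Proof.
  apply Rmult_lt_compat_r with (r := kappa) in Hhk; auto.
  unfold Rdiv in Hhk. rewrite Rmult_1_l, Rinv_l in Hhk; lra.
Qed.

Lemma phiLip_nonneg : 0 <= phiLip N La c1 c2.
Proof.
  unfold phiLip. assert (Hn := INR_N_pos N HN).
  apply Rmult_le_pos. unfold Rdiv; apply Rmult_le_pos; [lra|left; apply Rinv_0_lt_compat; nra].
  assert (0 <= c2 / c1) by (unfold Rdiv; apply Rmult_le_pos; [lra|left; apply Rinv_0_lt_compat; lra]). lra.
Qed.

Lemma vel_update y z n i k : MT_solution N d kappa h a y z -> (i < N)%nat -> (k < d)%nat ->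
  z (S n) i k = (1 - h * kappa) * z n i k + h * kappa * sumN N (fun l => phi N d a y n i l * z n l k).
Proof.
  intros Hs Hi Hk. destruct (Hs n i k Hi Hk) as [_ ->].
  rewrite (sumN_ext _ _ (fun l => phi N d a y n i l * z n l k - z n i k * phi N d a y n i l))
    by (intros; ring).
  rewrite sumN_minus, sumN_scal, (phi_rowsum N d c1 c2 a) by auto. ring.
Qed.

Lemma X_step y z n : MT_solution N d kappa h a y z ->
  frobD N d y (S n) <= frobD N d y n + h * frobD N d z n.
Proof.
  intros Hs. rewrite !frobD_FN.
  rewrite (FN_ext_lt N d _ (fun i j k => (y n i k - y n j k) + h * (z n i k - z n j k))).
  - eapply Rle_trans; [apply FN_mink|]. rewrite FN_scal, Rabs_right by lra. lra.
  - intros i j k Hi Hj Hk. destruct (Hs n i k Hi Hk) as [-> _].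
    destruct (Hs n j k Hj Hk) as [-> _]. ring.
Qed.

Lemma Zsq_frobD z n : Zsq N d (z n) = frobD N d z n ^ 2.
Proof. rewrite frobD_FN, FN_sq. reflexivity. Qed.

Lemma G_FN y n (zz : nat -> nat -> R) :
  FN N d (fun i j k => sumN N (fun l => (phi N d a y n i l - phi N d a y n j l) * zz l k))
  <= sqrt (INR N) * phiLip N La c1 c2 * frobD N d y n * sqrt (Zsq N d zz).
Proof.
  assert (H0 := phiLip_nonneg). assert (H1 := sqrt_pos (INR N)).
  assert (H2 := sqrt_pos (Zsq N d zz)).
  assert (H3 : 0 <= frobD N d y n) by apply sqrt_pos.
  apply FN_le_sq.
  - apply Rmult_le_pos; [apply Rmult_le_pos; [apply Rmult_le_pos|]|]; auto.
  - cbv beta. eapply Rle_trans; [eapply (G_lemma N d c1 c2 La a); eauto|].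
    right. rewrite !Rpow_mult_distr, !pow2_sqrt; auto using pos_INR, Zsq_nonneg.
Qed.

Lemma V_step y z n : MT_solution N d kappa h a y z ->
  frobD N d z (S n) <= (1 - h * kappa) * frobD N d z n
     + h * kappa * (sqrt (INR N) * phiLip N La c1 c2 * frobD N d y n * frobD N d z n).
Proof.
  intros Hs. assert (Hu := hk_lt1).
  rewrite (frobD_FN N d z (S n)).
  rewrite (FN_ext_lt N d _ (fun i j k => (1 - h * kappa) * (z n i k - z n j k)
       + h * kappa * sumN N (fun l => (phi N d a y n i l - phi N d a y n j l) * z n l k))).
  - eapply Rle_trans; [apply FN_mink|]. rewrite !FN_scal, !Rabs_right by nra.
    rewrite <- frobD_FN. apply Rplus_le_compat_l. apply Rmult_le_compat_l; [nra|].
    eapply Rle_trans; [apply G_FN|]. rewrite Zsq_frobD, sqrt_pow2 by apply sqrt_pos. lra.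
  - intros i j k Hi Hj Hk. rewrite !(vel_update y z n) by auto.
    rewrite (sumN_ext _ (fun l => (phi N d a y n i l - phi N d a y n j l) * z n l k)
              (fun l => phi N d a y n i l * z n l k - phi N d a y n j l * z n l k)) by (intros; ring).
    rewrite sumN_minus. ring.
Qed.

Lemma E_step x v xb vb n R0 :
  MT_solution N d kappa h a x v -> MT_solution N d kappa h a xb vb ->
  (forall i m, (i < N)%nat -> (m < N)%nat -> dist_ij d x n i m <= R0) ->
  (forall i m, (i < N)%nat -> (m < N)%nat -> dist_ij d xb n i m <= R0) ->
  frobDD N d v vb (S n) <= (1 - h * kappa) * frobDD N d v vb n
     + h * kappa * (sqrt (INR N) * phiLip N La c1 c2 * frobD N d xb n * frobDD N d v vb n)
     + h * kappa * (2 * INR N * (phiLip N La c1 c2 * R0) * frobD N d v n).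
Proof.
  intros Hs Hsb HR HRb. assert (Hu := hk_lt1).
  set (Lp := phiLip N La c1 c2).
  set (Gb := fun i j k => sumN N (fun l => (phi N d a xb n i l - phi N d a xb n j l) * (v n l k - vb n l k))).
  set (dl := fun i l => phi N d a x n i l - phi N d a xb n i l).
  set (B := fun i j k => sumN N (fun l => dl i l * v n l k) - sumN N (fun l => dl j l * v n l k)).
  rewrite (frobDD_FN N d v vb (S n)).
  rewrite (FN_ext_lt N d _ (fun i j k => ((1 - h * kappa) * ((v n i k - v n j k) - (vb n i k - vb n j k))
       + h * kappa * Gb i j k) + h * kappa * B i j k)).
  - eapply Rle_trans; [apply FN_mink|]. eapply Rle_trans; [apply Rplus_le_compat_r; apply FN_mink|].
    rewrite !FN_scal, !Rabs_right by nra. rewrite <- frobDD_FN.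
    apply Rplus_le_compat; [apply Rplus_le_compat_l|]; apply Rmult_le_compat_l; try nra.
    + unfold Gb. eapply Rle_trans; [apply G_FN|]. right. f_equal.
      rewrite frobDD_FN. unfold FN, Zsq. f_equal. apply T3_ext_lt. intros; ring.
    + assert (HLp := phiLip_nonneg). fold Lp in HLp.
      assert (HR0 : 0 <= R0) by (eapply Rle_trans; [apply (dist_nonneg d x n 0 0)| apply HR; lia]).
      apply FN_le_sq.
      * assert (0 <= frobD N d v n) by apply sqrt_pos. assert (Hn := pos_INR N).
        apply Rmult_le_pos; [|lra]. apply Rmult_le_pos; [lra|]. nra.
      * unfold B. eapply Rle_trans; [apply (B_lemma N d dl (v n) (Lp * R0))|].
        -- intros i Hi. unfold dl. rewrite sumN_minus, !(phi_rowsum N d c1 c2 a) by auto. ring.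
        -- intros i l Hi Hl. unfold dl, Lp. eapply phi_diff; eauto.
        -- rewrite Zsq_frobD. right. ring.
  - intros i j k Hi Hj Hk. rewrite !(vel_update x v n), !(vel_update xb vb n) by auto.
    unfold Gb, B, dl.
    rewrite (sumN_ext _ (fun l => (phi N d a xb n i l - phi N d a xb n j l) * (v n l k - vb n l k))
      (fun l => (phi N d a xb n i l * v n l k - phi N d a xb n i l * vb n l k)
              - (phi N d a xb n j l * v n l k - phi N d a xb n j l * vb n l k))) by (intros; ring).
    rewrite (sumN_ext _ (fun l => (phi N d a x n i l - phi N d a xb n i l) * v n l k)
      (fun l => phi N d a x n i l * v n l k - phi N d a xb n i l * v n l k)) by (intros; ring).
    rewrite (sumN_ext _ (fun l => (phi N d a x n j l - phi N d a xb n j l) * v n l k)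
      (fun l => phi N d a x n j l * v n l k - phi N d a xb n j l * v n l k)) by (intros; ring).
    rewrite !sumN_minus. ring.
Qed.
End Dyn.

Definition Gs (c s : R) : R := s - c * s ^ 2 / 2.

Lemma RInt_psi N La c1 c2 a b :
  RInt (psi N La c1 c2) a b = Gs (phiLip N La c1 c2 * INR N) b - Gs (phiLip N La c1 c2 * INR N) a.
Proof.
  apply is_RInt_unique. unfold psi, Gs.
  set (c := phiLip N La c1 c2 * INR N).
  replace (fun s => 1 - phiLip N La c1 c2 * INR N * s) with (fun s => 1 - c * s) by reflexivity.
  apply (is_RInt_derive (fun s => s - c * s ^ 2 / 2)).
  - intros; auto_derive; auto. field.
  - intros. apply (continuity_pt_filterlim (fun s => 1 - c*s)). reg.
Qed.

Section Flock.
Variables (N d : nat) (kappa h c1 c2 La : R) (a : R -> R).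
Hypothesis HN : (1 <= N)%nat.
Hypothesis Hkappa : 0 < kappa.
Hypothesis Hh0 : 0 < h.
Hypothesis Hhk : h < 1 / kappa.
Hypothesis Hc1 : 0 < c1.
Hypothesis Hc12 : c1 <= c2.
Hypothesis HLa : 0 < La.
Hypothesis Ha_bnd : forall r, 0 <= r -> c1 <= a r <= c2.
Hypothesis Ha_lip : forall r1 r2, 0 <= r1 -> 0 <= r2 -> Rabs (a r1 - a r2) <= La * Rabs (r1 - r2).

Lemma phiLip_pos : 0 < phiLip N La c1 c2.
Proof.
  unfold phiLip. assert (Hn := INR_N_pos N HN).
  apply Rmult_lt_0_compat. unfold Rdiv; apply Rmult_lt_0_compat; [lra| apply Rinv_0_lt_compat; nra].
  assert (0 <= c2 / c1) by (unfold Rdiv; apply Rmult_le_pos; [lra|left; apply Rinv_0_lt_compat; lra]). lra.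
Qed.

Lemma cM : phiLip N La c1 c2 * INR N * Mconst N La c1 c2 = 1 / 4.
Proof.
  assert (Hn := INR_N_pos N HN). assert (Hp := phiLip_pos).
  unfold Mconst. field. split; lra.
Qed.

Lemma sqrtN_le : sqrt (INR N) <= INR N.
Proof.
  assert (Hn : 1 <= INR N) by (apply (le_INR 1); auto).
  rewrite <- (sqrt_pow2 (INR N)) at 2 by lra. apply sqrt_le_1_alt. nra.
Qed.

Lemma flock y z :
  MT_solution N d kappa h a y z ->
  frobD N d y 0 < Mconst N La c1 c2 ->
  frobD N d z 0 < kappa * RInt (psi N La c1 c2) (frobD N d y 0) (Mconst N La c1 c2) ->
  forall n, frobD N d y n < Mconst N La c1 c2 /\
    frobD N d z n + kappa * Gs (phiLip N La c1 c2 * INR N) (frobD N d y n)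
      < kappa * Gs (phiLip N La c1 c2 * INR N) (Mconst N La c1 c2).
Proof.
  intros Hs HX0 HV0.
  assert (HcM := cM). assert (Hp := phiLip_pos). assert (Hn := INR_N_pos N HN).
  assert (Hsq := sqrtN_le). assert (Hu := hk_lt1 kappa h Hkappa Hhk).
  set (c := phiLip N La c1 c2 * INR N) in *. set (M := Mconst N La c1 c2) in *.
  assert (Hc : 0 < c) by (unfold c; nra).
  assert (HM : 0 < M) by nra.
  induction n.
  - split; auto. rewrite RInt_psi in HV0. fold c in HV0. fold M in HV0. lra.
  - destruct IHn as [HX HL].
    set (X := frobD N d y n) in *. set (V := frobD N d z n) in *.
    assert (HX' := X_step N d kappa h a Hh0 y z n Hs). fold X V in HX'.
    assert (HV' := V_step N d kappa h c1 c2 La a HN Hkappa Hh0 Hhk Hc1 Hc12 HLa Ha_bnd Ha_lip y z n Hs).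
    fold X V in HV'.
    set (X' := frobD N d y (S n)) in *. set (V' := frobD N d z (S n)) in *.
    assert (HX0' : 0 <= X) by apply sqrt_pos. assert (HV0' : 0 <= V) by apply sqrt_pos.
    assert (HX1 : 0 <= X') by apply sqrt_pos. assert (HV1 : 0 <= V') by apply sqrt_pos.
    assert (HV'2 : V' <= (1 - h * kappa) * V + h * kappa * (c * X * V)).
    { eapply Rle_trans; [apply HV'|]. apply Rplus_le_compat_l. apply Rmult_le_compat_l; [nra|].
      unfold c. assert (0 <= phiLip N La c1 c2 * X * V) by (apply Rmult_le_pos; nra).
      replace (phiLip N La c1 c2 * INR N * X * V) with (INR N * (phiLip N La c1 c2 * X * V)) by ring.
      replace (sqrt (INR N) * phiLip N La c1 c2 * X * V) with (sqrt (INR N) * (phiLip N La c1 c2 * X * V)) by ring.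
      apply Rmult_le_compat_r; auto. }
    unfold Gs in *.
    assert (HG : X' - c * X' ^ 2 / 2 <= X - c * X ^ 2 / 2 + (1 - c * X) * (h * V)).
    { assert (X' - c * X' ^ 2 / 2 = X - c * X ^ 2 / 2 + (1 - c * X) * (X' - X) - c / 2 * (X' - X) ^ 2) by field.
      assert (0 <= c / 2 * (X' - X) ^ 2) by (apply Rmult_le_pos; [lra| apply pow2_ge_0]).
      assert (1 - c * X >= 0) by nra.
      assert ((1 - c * X) * (X' - X) <= (1 - c * X) * (h * V)) by (apply Rmult_le_compat_l; lra).
      lra. }
    assert (HL' : V' + kappa * (X' - c * X' ^ 2 / 2) < kappa * (M - c * M ^ 2 / 2)).
    { assert (kappa * (X' - c * X' ^ 2 / 2) <= kappa * (X - c * X ^ 2 / 2 + (1 - c * X) * (h * V)))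
        by (apply Rmult_le_compat_l; lra).
      nra. }
    split; auto.
    assert (HGX : 0 <= X - c * X ^ 2 / 2) by nra.
    assert (HVb : V < kappa * M) by nra.
    assert (HhV : h * V < M).
    { assert (h * V <= h * (kappa * M)) by (apply Rmult_le_compat_l; lra). nra. }
    assert (HGX' : X' - c * X' ^ 2 / 2 < M - c * M ^ 2 / 2) by nra.
    destruct (Rlt_le_dec X' M) as [H|H]; auto.
    exfalso.
    assert (X' - c * X' ^ 2 / 2 - (M - c * M ^ 2 / 2) = (X' - M) * (1 - c * (X' + M) / 2)) by field.
    assert (c * (X' + M) < 3 / 4) by nra.
    assert (0 <= (X' - M) * (1 - c * (X' + M) / 2)) by (apply Rmult_le_pos; lra).
    lra.
Qed.
End Flock.

Lemma fold_min_le (l : list R) c x : In x l -> fold_right Rmin c l <= x.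
Proof.
  induction l; simpl; [tauto|]. intros [->|H].
  - apply Rmin_l.
  - eapply Rle_trans; [apply Rmin_r|]. auto.
Qed.

Lemma fold_min_ge (l : list R) c m : m <= c -> (forall x, In x l -> m <= x) -> m <= fold_right Rmin c l.
Proof.
  induction l; simpl; auto. intros Hc H. apply Rmin_glb; auto.
Qed.

Lemma fold_max_ge (l : list R) c : c <= fold_right Rmax c l.
Proof.
  induction l; simpl; [lra|]. eapply Rle_trans; [apply IHl| apply Rmax_r].
Qed.

Lemma minN_le (N : nat) (f : nat -> R) i : (i < N)%nat -> Defs.minN N f <= f i.
Proof.
  intros Hi. unfold Defs.minN. apply fold_min_le. apply in_map. apply in_seq. lia.
Qed.

Lemma minN_ge (N : nat) (f : nat -> R) m : m <= f 0%nat -> (forall i, (i < N)%nat -> m <= f i) -> m <= Defs.minN N f.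
Proof.
  intros H0 H. unfold Defs.minN. apply fold_min_ge; auto.
  intros x Hx. apply in_map_iff in Hx. destruct Hx as [i [<- Hi]]. apply in_seq in Hi. apply H; lia.
Qed.

Lemma maxN_ge0 (N : nat) (f : nat -> R) : 0 <= f 0%nat -> 0 <= Defs.maxN N f.
Proof. intros H. unfold Defs.maxN. eapply Rle_trans; [apply H| apply fold_max_ge]. Qed.

Lemma final_alg u q s E V Lh C1 :
  0 < u < 1 -> 1 - u <= q <= 1 -> 0 <= s <= 1 / 4 -> 0 <= E -> 0 <= V -> 0 <= Lh ->
  Lh <= (1 - u + u * s) * E + u * V / 2 ->
  q ^ 2 + 4 * u ^ 2 * s ^ 2 + u * q / 2 <= C1 ->
  Lh ^ 2 <= C1 * E ^ 2 + 2 * u * q * E * V + 2 * u ^ 2 * V ^ 2.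
Proof.
  intros Hu Hq Hs HE HV HL HLb HC.
  set (K := 1 - u + u * s).
  assert (HK : 0 <= K) by (unfold K; nra).
  assert (H1 : Lh ^ 2 <= (K * E + u * V / 2) ^ 2).
  { apply pow_incr. split; auto. }
  eapply Rle_trans; [apply H1|].
  assert (Ha : C1 - K ^ 2 >= 3 * u ^ 2 * s ^ 2).
  { unfold K. assert (q ^ 2 - (1 - u) ^ 2 >= 0) by nra.
    assert (2 * (1 - u) * s <= (1 - u) / 2) by nra.
    assert (u * (q / 2 - 2 * (1 - u) * s) >= 0) by (apply Rle_ge, Rmult_le_pos; lra). nra. }
  assert (HE2 : 0 <= E ^ 2) by apply pow2_ge_0.
  assert (C1 * E ^ 2 >= (K ^ 2 + 3 * u ^ 2 * s ^ 2) * E ^ 2) by nra.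
  destruct (Rle_dec K (2 * q)) as [Hk|Hk].
  - assert (K * u * E * V <= 2 * q * u * E * V).
    { repeat apply Rmult_le_compat_r; try lra. }
    nra.
  - assert (K - 2 * q <= u * s) by (unfold K in *; nra).
    assert ((K - 2 * q) * (u * E * V) <= u * s * (u * E * V)).
    { apply Rmult_le_compat_r; auto. apply Rmult_le_pos; [nra|auto]. }
    assert (0 <= u ^ 2 * (3 * (s * E - V / 6) ^ 2 + (7/4 - 1/12) * V ^ 2)).
    { apply Rmult_le_pos; [nra|]. assert (0 <= (s * E - V / 6) ^ 2) by apply pow2_ge_0.
      assert (0 <= V ^ 2) by apply pow2_ge_0. nra. }
    nra.
Qed.

Lemma FN_N1 d F : (forall k, F 0%nat 0%nat k = 0) -> FN 1 d F = 0.
Proof.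
  intros H. rewrite (FN_ext_lt 1 d F (fun i j k => 0 * 1)).
  - rewrite FN_scal, Rabs_R0. ring.
  - intros i j k Hi Hj Hk. assert (i = 0%nat) by lia. assert (j = 0%nat) by lia. subst.
    rewrite H. ring.
Qed.

Lemma pair_le1 N f : (2 <= N)%nat -> (forall i, (i < N)%nat -> 0 <= f i) -> sumN N f = 1 ->
  f 0%nat + f 1%nat <= 1.
Proof.
  intros HN Hf Hs. destruct N as [|[|m]]; try lia.
  rewrite sumN_first, sumN_first in Hs.
  assert (0 <= sumN m (fun i => f (S (S i)))) by (apply sumN_nonneg; intros; apply Hf; lia).
  simpl in Hs. lra.
Qed.

Theorem proposition4p2
  (N d : nat) (kappa h c1 c2 La : R) (a : R -> R)
  (x v xb vb : nat -> nat -> nat -> R)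
  (HN : (1 <= N)%nat) (Hd : (1 <= d)%nat)
  (Hkappa : 0 < kappa) (Hh0 : 0 < h) (Hh1 : h < 1) (Hhk : h < 1 / kappa)
  (Hc1 : 0 < c1) (Hc12 : c1 <= c2) (HLa : 0 < La)
  (Ha_bnd : forall r, 0 <= r -> c1 <= a r <= c2)
  (Ha_lip : forall r1 r2, 0 <= r1 -> 0 <= r2 -> Rabs (a r1 - a r2) <= La * Rabs (r1 - r2))
  (Hsol : MT_solution N d kappa h a x v)
  (Hsolb : MT_solution N d kappa h a xb vb)
  (Hx0 : Rmax (frobD N d x 0) (frobD N d xb 0) < Mconst N La c1 c2)
  (Hv0 : frobD N d v 0 <
         kappa * RInt (psi N La c1 c2) (frobD N d x 0) (Mconst N La c1 c2))
  (Hvb0 : frobD N d vb 0 <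
          kappa * RInt (psi N La c1 c2) (frobD N d xb 0) (Mconst N La c1 c2)) :
  forall n : nat,
    let M := Mconst N La c1 c2 in
    let lam := lambda_n N d a xb n in
    let alp := alpha_n N d a xb n in
    let C1 := (1 - h * kappa * lam) ^ 2
      + 4 * h ^ 2 * kappa ^ 2
          * (alp + La ^ 2 * M ^ 2 / (INR N * c1 ^ 2) * (1 + c2 / c1) ^ 2)
      + 2 * sqrt 2 * h * kappa * (1 - h * kappa * lam)
          * sqrt (alp + La ^ 2 * M ^ 2 / c1 ^ 2 * (1 + c2 / c1) ^ 2) in
    let C2 := 8 * h * kappa * La * M / c1 * (1 - h * kappa * lam) * (1 + c2 / c1) in
    let C3 := 32 * h ^ 2 * kappa ^ 2 * La ^ 2 * M ^ 2 / c1 ^ 2 * (1 + c2 / c1) ^ 2 in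
    frobDD N d v vb (S n) ^ 2
      <= C1 * frobDD N d v vb n ^ 2
         + C2 * frobDD N d v vb n * frobD N d v n
         + C3 * frobD N d v n ^ 2.
Proof.
  intros n M lam alp C1 C2 C3.
  assert (Hu := hk_lt1 kappa h Hkappa Hhk).
  destruct (Nat.eq_dec N 1) as [HN1|HN1].
  { subst N.
    assert (H1 : forall m, frobDD 1 d v vb m = 0).
    { intros m. rewrite frobDD_FN. apply FN_N1. intros; ring. }
    assert (H2 : forall m, frobD 1 d v m = 0).
    { intros m. rewrite frobD_FN. apply FN_N1. intros; ring. }
    rewrite !H1, !H2. replace (C1 * 0 ^ 2 + C2 * 0 * 0 + C3 * 0 ^ 2) with 0 by ring. lra. }
  assert (HN2 : (2 <= N)%nat) by lia.
  destruct (flock N d kappa h c1 c2 La a HN Hkappa Hh0 Hhk Hc1 Hc12 HLa Ha_bnd Ha_lip x v Hsol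
              (Rle_lt_trans _ _ _ (Rmax_l _ _) Hx0) Hv0 n) as [HX _].
  destruct (flock N d kappa h c1 c2 La a HN Hkappa Hh0 Hhk Hc1 Hc12 HLa Ha_bnd Ha_lip xb vb Hsolb
              (Rle_lt_trans _ _ _ (Rmax_r _ _) Hx0) Hvb0 n) as [HXb _].
  fold M in HX, HXb.
  assert (HcM := cM N c1 c2 La HN Hc1 Hc12 HLa). fold M in HcM.
  assert (Hp := phiLip_pos N c1 c2 La HN Hc1 Hc12 HLa).
  assert (Hn := INR_N_pos N HN).
  assert (Hsq := sqrtN_le N HN).
  set (Lp := phiLip N La c1 c2) in *.
  assert (HLN : 0 < Lp * INR N) by nra.
  assert (HM : 0 < M) by (destruct (Rlt_le_dec 0 M); auto; nra).
  assert (Hst := E_step N d kappa h c1 c2 La a HN Hkappa Hh0 Hhk Hc1 Hc12 HLa Ha_bnd Ha_lip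
                   x v xb vb n M Hsol Hsolb).
  assert (HR : forall i m, (i < N)%nat -> (m < N)%nat -> dist_ij d x n i m <= M).
  { intros i m Hi Hm. left. apply Rle_lt_trans with (frobD N d x n); [apply dist_le_frobD; auto | exact HX]. }
  assert (HRb : forall i m, (i < N)%nat -> (m < N)%nat -> dist_ij d xb n i m <= M).
  { intros i m Hi Hm. left. apply Rle_lt_trans with (frobD N d xb n); [apply dist_le_frobD; auto | exact HXb]. }
  specialize (Hst HR HRb). fold Lp in Hst.
  set (E := frobDD N d v vb n) in *. set (V := frobD N d v n) in *.
  set (Xb := frobD N d xb n) in *. set (u := h * kappa) in *.
  set (s := sqrt (INR N) * Lp * M).
  assert (HE : 0 <= E) by apply sqrt_pos. assert (HV : 0 <= V) by apply sqrt_pos.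
  assert (HXb0 : 0 <= Xb) by apply sqrt_pos.
  assert (HsN := sqrt_pos (INR N)).
  assert (HsN2 : sqrt (INR N) ^ 2 = INR N) by (apply pow2_sqrt; lra).
  assert (HLpM : Lp * M = 1 / (4 * INR N)) by (field_simplify_eq; [nra| lra]).
  assert (Hs0 : 0 <= s) by (unfold s; apply Rmult_le_pos; nra).
  assert (Hs1 : s <= 1 / 4).
  { unfold s. rewrite Rmult_assoc, HLpM.
    replace (1 / 4) with (INR N * (1 / (4 * INR N))) by (field; lra).
    apply Rmult_le_compat_r; auto. left; apply Rdiv_lt_0_compat; lra. }
  assert (Hs2 : s ^ 2 = 1 / (16 * INR N)).
  { unfold s. replace ((sqrt (INR N) * Lp * M) ^ 2) with (sqrt (INR N) ^ 2 * (Lp * M) ^ 2) by ring.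
    rewrite HsN2, HLpM. field. lra. }
  assert (HE1 : frobDD N d v vb (S n) <= (1 - u + u * s) * E + u * V / 2).
  { eapply Rle_trans; [apply Hst|].
    assert (sqrt (INR N) * Lp * Xb * E <= s * E).
    { unfold s. apply Rmult_le_compat_r; auto. apply Rmult_le_compat_l; [nra| lra]. }
    assert (2 * INR N * (Lp * M) = 1 / 2) by (rewrite HLpM; field; lra).
    rewrite H0. assert (0 < u) by (unfold u; nra).
    assert (u * (sqrt (INR N) * Lp * Xb * E) <= u * (s * E)) by (apply Rmult_le_compat_l; lra).
    lra. }
  assert (Hrho : La * M / c1 * (1 + c2 / c1) = 1 / 4).
  { rewrite <- HcM. unfold Lp, phiLip. field. lra. }
  assert (HX1 : La ^ 2 * M ^ 2 / (INR N * c1 ^ 2) * (1 + c2 / c1) ^ 2 = s ^ 2).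
  { rewrite Hs2. replace (La ^ 2 * M ^ 2 / (INR N * c1 ^ 2) * (1 + c2 / c1) ^ 2)
      with ((La * M / c1 * (1 + c2 / c1)) ^ 2 / INR N) by (field; lra).
    rewrite Hrho. field. lra. }
  assert (HX2 : La ^ 2 * M ^ 2 / c1 ^ 2 * (1 + c2 / c1) ^ 2 = 1 / 16).
  { replace (La ^ 2 * M ^ 2 / c1 ^ 2 * (1 + c2 / c1) ^ 2)
      with ((La * M / c1 * (1 + c2 / c1)) ^ 2) by (field; lra).
    rewrite Hrho. field. }
  assert (Hlam0 : 0 <= lam).
  { assert (PN := phi_nonneg N d c1 c2 a HN Hc1 Ha_bnd xb n).
    unfold lam, lambda_n. apply minN_ge.
    - apply minN_ge; [| intros]; apply Rplus_le_le_0_compat; apply PN.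
    - intros i Hi. apply minN_ge; [| intros]; apply Rplus_le_le_0_compat; apply PN. }
  assert (Hlam1 : lam <= 1).
  { set (g := fun i j => phi N d a xb n i j + phi N d a xb n j i).
    assert (Hg : forall i j, (i < N)%nat -> (j < N)%nat -> lam <= g i j).
    { intros i j Hi Hj. unfold lam, lambda_n.
      eapply Rle_trans; [apply (minN_le N _ i Hi)|]. apply (minN_le N _ j Hj). }
    assert (A1 := Hg 0%nat 0%nat ltac:(lia) ltac:(lia)).
    assert (A2 := Hg 0%nat 1%nat ltac:(lia) ltac:(lia)).
    assert (A3 := Hg 1%nat 1%nat ltac:(lia) ltac:(lia)).
    unfold g in A1, A2, A3.
    assert (B0 := pair_le1 N (fun j => phi N d a xb n 0 j) HN2
                   (fun j _ => phi_nonneg N d c1 c2 a HN Hc1 Ha_bnd xb n 0 j)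
                   (phi_rowsum N d c1 c2 a HN Hc1 Ha_bnd xb n 0)).
    assert (B1 := pair_le1 N (fun j => phi N d a xb n 1 j) HN2
                   (fun j _ => phi_nonneg N d c1 c2 a HN Hc1 Ha_bnd xb n 1 j)
                   (phi_rowsum N d c1 c2 a HN Hc1 Ha_bnd xb n 1)).
    simpl in B0, B1. lra. }
  assert (Halp : 0 <= alp).
  { unfold alp, alpha_n. apply maxN_ge0. apply maxN_ge0. apply pow2_ge_0. }
  assert (Hu0 : 0 < u) by (unfold u; nra).
  assert (Hq : 1 - u <= 1 - u * lam <= 1) by (split; nra).
  assert (HC2 : C2 = 2 * u * (1 - u * lam)).
  { unfold C2. replace (8 * h * kappa * La * M / c1 * (1 - u * lam) * (1 + c2 / c1))
      with (8 * u * (1 - u * lam) * (La * M / c1 * (1 + c2 / c1))) by (unfold u; field; lra).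
    rewrite Hrho. field. }
  assert (HC3 : C3 = 2 * u ^ 2).
  { unfold C3. replace (32 * h ^ 2 * kappa ^ 2 * La ^ 2 * M ^ 2 / c1 ^ 2 * (1 + c2 / c1) ^ 2)
      with (32 * u ^ 2 * (La * M / c1 * (1 + c2 / c1)) ^ 2) by (unfold u; field; lra).
    rewrite Hrho. field. }
  assert (HC1 : (1 - u * lam) ^ 2 + 4 * u ^ 2 * s ^ 2 + u * (1 - u * lam) / 2 <= C1).
  { unfold C1. rewrite HX1, HX2.
    assert (Hs2' : 1 <= sqrt 2).
    { rewrite <- sqrt_1. apply sqrt_le_1_alt. lra. }
    assert (Hsa : 1 / 4 <= sqrt (alp + 1 / 16)).
    { rewrite <- (sqrt_pow2 (1/4)) by lra. apply sqrt_le_1_alt. lra. }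
    replace (4 * h ^ 2 * kappa ^ 2 * (alp + s ^ 2)) with (4 * u ^ 2 * alp + 4 * u ^ 2 * s ^ 2)
      by (unfold u; ring).
    replace (2 * sqrt 2 * h * kappa * (1 - u * lam) * sqrt (alp + 1 / 16))
      with (2 * (u * (1 - u * lam)) * (sqrt 2 * sqrt (alp + 1 / 16))) by (unfold u; ring).
    assert (0 <= u * (1 - u * lam)) by nra.
    assert (1 / 4 <= sqrt 2 * sqrt (alp + 1 / 16)) by nra.
    assert (0 <= 4 * u ^ 2 * alp) by nra.
    nra. }
  rewrite HC2, HC3.
  apply final_alg with (s := s); auto; try lra.
  apply sqrt_pos.
Qed.
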